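(* Let $n,M$ be positive integers and $\epsilon\in[0,1]$. Every $(n,M,\epsilon)$-FLF code for the CM-DMBC, with encoding functions $f_1,\dots,f_n$, satisfies, for every $\lambda>0$, $$\epsilon\ \ge\ \frac12\,\mathbb P\Big[\sum_{k=1}^2\eta_k\sum_{i=1}^n \imath_{P^*,W_k}\big(f_i(J,Y_1^{i-1},Y_2^{i-1});Y_{k,i}\big)\le \log M-\lambda\Big]-e^{-\lambda},$$ where the probability is computed under the distribution $$\mathbb P_{J,Y_1^n,Y_2^n}(j,y_1^n,y_2^n)=\frac1M\prod_{i=1}^n\prod_{k=1}^2 W_k\big(y_{k,i}\,\big|\,f_i(j,y_1^{i-1},y_2^{i-1})\big).$$
   Context: Setting: finite alphabets $\mathcal X=\{1,\dots,N\}$, $\mathcal Y$; transition matrices $W_1,W_2$ from $\mathcal X$ to $\mathcal Y$. The common-message discrete memoryless broadcast channel (CM-DMBC) has, at each time, outputs $(y_1,y_2)$ with probability $W_1(y_1|x)W_2(y_2|x)$ given input $x$, independently over time. For a distribution $P$ on $\mathcal X$: $PW_k(y)=\sum_xP(x)W_k(y|x)$, $\imath_{P,W_k}(x;y)=\log\frac{W_k(y|x)}{PW_k(y)}$ (natural log), $I_k(P)=\sum_xP(x)D(W_k(\cdot|x)\|PW_k)$, $V_k(P)=\sum_xP(x)\mathrm{Var}[\imath_{P,W_k}(x;Y_k)]$ with $Y_k\sim W_k(\cdot|x)$. $C=\max_P\min_kI_k(P)$, $C_k=\max_PI_k(P)$. Standing assumptions: the maximizer $P^*$ of $\min_kI_k$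 is unique, $P^*(x)>0$ for all $x$, $V_k(P^* )>0$ and $C_k>C$ for $k=1,2$. Let $P^*_{Y_k}=P^*W_k$ and for $\mathbf v\in\mathbb R^N$ with entries summing to zero, $\mathrm dI_k(\mathbf v)=\sum_xv_xD(W_k(\cdot|x)\|P^*_{Y_k})$. $\eta\in(0,1)$ is the unique constant with $\eta\,\mathrm dI_1(\mathbf v)+(1-\eta)\mathrm dI_2(\mathbf v)=0$ for all such $\mathbf v$; $\eta_1=\eta$, $\eta_2=1-\eta$. An $(n,M,\epsilon)$-FLF (fixed-length feedback) code consists of encoding functions $f_i:\{1,\dots,M\}\times\mathcal Y^{i-1}\times\mathcal Y^{i-1}\to\mathcal X$, $i=1,\dots,n$, producing $X_i=f_i(J,Y_1^{i-1},Y_2^{i-1})$ where the message $J$ is uniform on $\{1,\dots,M\}$, and decoders $g_k:\mathcal Y^n\to\{1,\dots,M\}$ with $\mathbb P[g_k(Y_k^n)\ne J]\le\epsilon$ for $k=1,2$. *)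

(* Defs.v *)
From Stdlib Require Import Reals List Arith.
Import ListNotations.
Open Scope R_scope.

(* Finite alphabets are {0,...,Nx-1} (inputs) and {0,...,Ny-1} (outputs).
   A channel is W : nat -> nat -> R with  W x y = W(y|x). *)

Fixpoint sumN (K : nat) (f : nat -> R) : R :=
  match K with O => 0 | S k => sumN k f + f k end.

Fixpoint prodN (K : nat) (f : nat -> R) : R :=
  match K with O => 1 | S k => prodN k f * f k end.

Definition sumL {A : Type} (l : list A) (f : A -> R) : R :=
  fold_right (fun a acc => f a + acc) 0 l.

Fixpoint seqs (Ny n : nat) : list (list nat) :=
  match n with
  | O => [nil]
  | S m => flat_map (fun s => map (fun y => s ++ [y]) (seq 0 Ny)) (seqs Ny m)
  end.

Definition is_channel (Nx Ny : nat) (W : nat -> nat -> R) : Prop :=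
  forall x, (x < Nx)%nat ->
    (forall y, (y < Ny)%nat -> 0 <= W x y) /\ sumN Ny (fun y => W x y) = 1.

Definition is_dist (Nx : nat) (P : nat -> R) : Prop :=
  (forall x, (x < Nx)%nat -> 0 <= P x) /\ sumN Nx P = 1.

Definition outdist (Nx : nat) (W : nat -> nat -> R) (P : nat -> R) (y : nat) : R :=
  sumN Nx (fun x => P x * W x y).

Definition info_density (Nx : nat) (W : nat -> nat -> R) (P : nat -> R)
  (x y : nat) : R := ln (W x y / outdist Nx W P y).

(* D(Wx || Q) ; terms with Wx y = 0 contribute 0 *)
Definition relent (Ny : nat) (Wx : nat -> R) (Q : nat -> R) : R :=
  sumN Ny (fun y => Wx y * ln (Wx y / Q y)).

Definition mutinf (Nx Ny : nat) (W : nat -> nat -> R) (P : nat -> R) : R :=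
  sumN Nx (fun x => P x * relent Ny (W x) (outdist Nx W P)).

Definition condvar (Nx Ny : nat) (W : nat -> nat -> R) (P : nat -> R) : R :=
  sumN Nx (fun x => P x *
    (sumN Ny (fun y => W x y * (info_density Nx W P x y) ^ 2)
     - (sumN Ny (fun y => W x y * info_density Nx W P x y)) ^ 2)).

Definition dI (Nx Ny : nat) (W : nat -> nat -> R) (Pstar : nat -> R)
  (v : nat -> R) : R :=
  sumN Nx (fun x => v x * relent Ny (W x) (outdist Nx W Pstar)).

Definition standing_assumptions (Nx Ny : nat) (W1 W2 : nat -> nat -> R)
  (Pstar : nat -> R) (eta : R) : Prop :=
  (1 <= Nx)%nat /\ (1 <= Ny)%nat /\
  is_channel Nx Ny W1 /\ is_channel Nx Ny W2 /\
  is_dist Nx Pstar /\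
  (forall P, is_dist Nx P ->
     Rmin (mutinf Nx Ny W1 P) (mutinf Nx Ny W2 P)
       <= Rmin (mutinf Nx Ny W1 Pstar) (mutinf Nx Ny W2 Pstar) /\
     (Rmin (mutinf Nx Ny W1 P) (mutinf Nx Ny W2 P)
        = Rmin (mutinf Nx Ny W1 Pstar) (mutinf Nx Ny W2 Pstar) ->
      forall x, (x < Nx)%nat -> P x = Pstar x)) /\
  (forall x, (x < Nx)%nat -> 0 < Pstar x) /\
  0 < condvar Nx Ny W1 Pstar /\ 0 < condvar Nx Ny W2 Pstar /\
  (* C_k = max_P I_k(P) > C = min_k I_k(Pstar) *)
  (exists P, is_dist Nx P /\
     mutinf Nx Ny W1 P > Rmin (mutinf Nx Ny W1 Pstar) (mutinf Nx Ny W2 Pstar)) /\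
  (exists P, is_dist Nx P /\
     mutinf Nx Ny W2 P > Rmin (mutinf Nx Ny W1 Pstar) (mutinf Nx Ny W2 Pstar)) /\
  0 < eta < 1 /\
  (forall v : nat -> R, sumN Nx v = 0 ->
     eta * dI Nx Ny W1 Pstar v + (1 - eta) * dI Nx Ny W2 Pstar v = 0).

(* Encoders: f i j p1 p2 = f_{i+1}(j, y1^{i}, y2^{i}), i = 0..n-1,
   where p1, p2 are the output prefixes of length i.  Messages j = 0..M-1. *)
Definition joint_pmf (n M : nat) (W1 W2 : nat -> nat -> R)
  (f : nat -> nat -> list nat -> list nat -> nat)
  (j : nat) (y1 y2 : list nat) : R :=
  / INR M * prodN n (fun i =>
      let x := f i j (firstn i y1) (firstn i y2) in
      W1 x (nth i y1 O) * W2 x (nth i y2 O)).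

Definition prob (Ny n M : nat) (W1 W2 : nat -> nat -> R)
  (f : nat -> nat -> list nat -> list nat -> nat)
  (E : nat -> list nat -> list nat -> bool) : R :=
  sumN M (fun j => sumL (seqs Ny n) (fun y1 => sumL (seqs Ny n) (fun y2 =>
     if E j y1 y2 then joint_pmf n M W1 W2 f j y1 y2 else 0))).

Definition is_FLF_code (Nx Ny : nat) (W1 W2 : nat -> nat -> R) (n M : nat)
  (eps : R) (f : nat -> nat -> list nat -> list nat -> nat)
  (g1 g2 : list nat -> nat) : Prop :=
  (forall i j p1 p2, (i < n)%nat -> (j < M)%nat ->
     length p1 = i -> length p2 = i ->
     Forall (fun y => (y < Ny)%nat) p1 -> Forall (fun y => (y < Ny)%nat) p2 ->
     (f i j p1 p2 < Nx)%nat) /\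
  prob Ny n M W1 W2 f (fun j y1 y2 => negb (Nat.eqb (g1 y1) j)) <= eps /\
  prob Ny n M W1 W2 f (fun j y1 y2 => negb (Nat.eqb (g2 y2) j)) <= eps.

Definition weighted_density (Nx n : nat) (W1 W2 : nat -> nat -> R)
  (Pstar : nat -> R) (eta : R)
  (f : nat -> nat -> list nat -> list nat -> nat)
  (j : nat) (y1 y2 : list nat) : R :=
  eta * sumN n (fun i =>
          info_density Nx W1 Pstar (f i j (firstn i y1) (firstn i y2)) (nth i y1 O))
  + (1 - eta) * sumN n (fun i =>
          info_density Nx W2 Pstar (f i j (firstn i y1) (firstn i y2)) (nth i y2 O)).

Definition Rleb (a b : R) : bool := if Rle_dec a b then true else false.

(* Main.v *)
Require Import Defs.
From Stdlib Require Import Reals List Arith Lra Lia Bool.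
Import ListNotations.
Open Scope R_scope.

Lemma sumN_ext K f g : (forall i, (i < K)%nat -> f i = g i) -> sumN K f = sumN K g.
Proof. induction K; simpl; intros H; auto. rewrite IHK by (intros; apply H; lia). rewrite H by lia; auto. Qed.
Lemma sumN_le K f g : (forall i, (i < K)%nat -> f i <= g i) -> sumN K f <= sumN K g.
Proof. induction K; simpl; intros H; [lra|]. assert (H1 := H K ltac:(lia)). assert (sumN K f <= sumN K g) by (apply IHK; intros; apply H; lia). lra. Qed.
Lemma sumN_plus K f g : sumN K (fun i => f i + g i) = sumN K f + sumN K g.
Proof. induction K; simpl; [lra|]. rewrite IHK; lra. Qed.
Lemma sumN_scal K c f : sumN K (fun i => c * f i) = c * sumN K f.
Proof. induction K; simpl; [lra|]. rewrite IHK; lra. Qed.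
Lemma sumN_swap K L (F : nat -> nat -> R) : sumN K (fun i => sumN L (fun j => F i j)) = sumN L (fun j => sumN K (fun i => F i j)).
Proof. induction K; simpl. { induction L; simpl; lra. } rewrite IHK, <- sumN_plus. auto. Qed.

Lemma sumL_ext {A} (l : list A) f g : (forall a, In a l -> f a = g a) -> sumL l f = sumL l g.
Proof. induction l; simpl; intros H; auto. rewrite IHl by auto. rewrite H by auto; auto. Qed.
Lemma sumL_le {A} (l : list A) f g : (forall a, In a l -> f a <= g a) -> sumL l f <= sumL l g.
Proof. induction l; simpl; intros H; [lra|]. assert (H1 := H a ltac:(auto)). assert (sumL l f <= sumL l g) by auto. lra. Qed.
Lemma sumL_plus {A} (l : list A) f g : sumL l (fun i => f i + g i) = sumL l f + sumL l g.
Proof. induction l; simpl; [lra|]. rewrite IHl; lra. Qed.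
Lemma sumL_scal {A} (l : list A) c f : sumL l (fun i => c * f i) = c * sumL l f.
Proof. induction l; simpl; [lra|]. rewrite IHl; lra. Qed.
Lemma sumL_zero {A} (l : list A) : sumL l (fun _ => 0) = 0.
Proof. induction l; simpl; [lra|]. rewrite IHl; lra. Qed.
Lemma sumL_app {A} (l1 l2 : list A) f : sumL (l1 ++ l2) f = sumL l1 f + sumL l2 f.
Proof. induction l1; simpl; [lra|]. rewrite IHl1; lra. Qed.
Lemma sumL_map {A B} (h : A -> B) l f : sumL (map h l) f = sumL l (fun a => f (h a)).
Proof. induction l; simpl; auto. rewrite IHl; auto. Qed.
Lemma sumL_flat_map {A B} (h : A -> list B) l f : sumL (flat_map h l) f = sumL l (fun a => sumL (h a) f).
Proof. induction l; simpl; auto. rewrite sumL_app, IHl; auto. Qed.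
Lemma sumL_seq K f : sumL (seq 0 K) f = sumN K f.
Proof. induction K; [reflexivity|]. rewrite seq_S, sumL_app, IHK. simpl. lra. Qed.
Lemma sumL_swap {A B} (l1 : list A) (l2 : list B) F : sumL l1 (fun a => sumL l2 (fun b => F a b)) = sumL l2 (fun b => sumL l1 (fun a => F a b)).
Proof. induction l1; simpl. { rewrite sumL_zero; auto. } rewrite IHl1, <- sumL_plus. auto. Qed.
Lemma sumN_sumL {A} K (l : list A) F : sumN K (fun i => sumL l (fun a => F i a)) = sumL l (fun a => sumN K (fun i => F i a)).
Proof. induction K; simpl. { rewrite sumL_zero; auto. } rewrite IHK, <- sumL_plus. auto. Qed.

Lemma prodN_ext K f g : (forall i, (i < K)%nat -> f i = g i) -> prodN K f = prodN K g.
Proof. induction K; simpl; intros H; auto. rewrite IHK by (intros; apply H; lia). rewrite H by lia; auto. Qed.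
Lemma prodN_mult K f g : prodN K (fun i => f i * g i) = prodN K f * prodN K g.
Proof. induction K; simpl; [lra|]. rewrite IHK; lra. Qed.
Lemma prodN_nonneg K f : (forall i, (i < K)%nat -> 0 <= f i) -> 0 <= prodN K f.
Proof. induction K; simpl; intros H; [lra|]. apply Rmult_le_pos; [apply IHK; intros; apply H; lia| apply H; lia]. Qed.
Lemma prodN_pos K f : (forall i, (i < K)%nat -> 0 < f i) -> 0 < prodN K f.
Proof. induction K; simpl; intros H; [lra|]. apply Rmult_lt_0_compat; [apply IHK; intros; apply H; lia| apply H; lia]. Qed.
Lemma prodN_cases K f : (forall i, (i < K)%nat -> 0 <= f i) -> prodN K f = 0 \/ (forall i, (i < K)%nat -> 0 < f i).
Proof. induction K; simpl; intros H. { right; intros; lia. }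
  destruct IHK as [E|P]. { intros; apply H; lia. } { left; rewrite E; lra. }
  destruct (Rle_lt_or_eq_dec 0 (f K)) as [p|e]. { apply H; lia. }
  - right. intros i Hi. destruct (Nat.eq_dec i K). subst; auto. apply P; lia.
  - left. rewrite <- e; lra. Qed.
Lemma sum_ln K f : (forall i, (i < K)%nat -> 0 < f i) -> sumN K (fun i => ln (f i)) = ln (prodN K f).
Proof. induction K; simpl; intros H. { rewrite ln_1; auto. }
  assert (P1 : 0 < prodN K f) by (apply prodN_pos; intros; apply H; lia).
  assert (P2 : 0 < f K) by (apply H; lia).
  rewrite ln_mult by auto. rewrite IHK; auto. Qed.

Lemma seqs_valid Ny m s : In s (seqs Ny m) -> length s = m /\ Forall (fun y => (y < Ny)%nat) s.
Proof. revert s; induction m; simpl; intros s H.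
  - destruct H as [<-|[]]; simpl; auto.
  - apply in_flat_map in H. destruct H as [s' [H1 H2]]. apply in_map_iff in H2. destruct H2 as [y [<- H3]].
    apply in_seq in H3. destruct (IHm s' H1) as [L F]. rewrite length_app; simpl. split; [lia|].
    apply Forall_app; split; auto. constructor; [lia| constructor]. Qed.

Lemma Forall_firstn' {A} (P : A -> Prop) k l : Forall P l -> Forall P (firstn k l).
Proof. intros H. rewrite <- (firstn_skipn k l) in H. apply Forall_app in H. tauto. Qed.

Definition frange (Nx Ny n M : nat) (f : nat -> nat -> list nat -> list nat -> nat) : Prop :=
  forall i j p1 p2, (i < n)%nat -> (j < M)%nat ->
     length p1 = i -> length p2 = i ->
     Forall (fun y => (y < Ny)%nat) p1 -> Forall (fun y => (y < Ny)%nat) p2 ->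
     (f i j p1 p2 < Nx)%nat.

Lemma app_last_facts (s : list nat) y i : (i < length s)%nat ->
  firstn i (s ++ [y]) = firstn i s /\ nth i (s ++ [y]) O = nth i s O.
Proof. intros H. rewrite firstn_app. replace (i - length s)%nat with O by lia. simpl.
  rewrite app_nil_r, app_nth1 by auto. auto. Qed.
Lemma app_last_facts2 (s : list nat) y :
  firstn (length s) (s ++ [y]) = s /\ nth (length s) (s ++ [y]) O = y.
Proof. rewrite firstn_app, Nat.sub_diag, firstn_all. simpl. rewrite app_nil_r, nth_middle. auto. Qed.

Lemma sum_chain Nx Ny (W2 : nat -> nat -> R) f n M j (y1 : list nat) :
  is_channel Nx Ny W2 -> frange Nx Ny n M f -> (j < M)%nat -> length y1 = n ->
  Forall (fun y => (y < Ny)%nat) y1 ->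
  forall m, (m <= n)%nat ->
  sumL (seqs Ny m) (fun y2 => prodN m (fun i => W2 (f i j (firstn i y1) (firstn i y2)) (nth i y2 O))) = 1.
Proof.
  intros HW Hf Hj Hl HF. induction m; intros Hm.
  - simpl. lra.
  - simpl seqs. rewrite sumL_flat_map.
    rewrite <- (IHm ltac:(lia)). apply sumL_ext. intros s Hs.
    destruct (seqs_valid _ _ _ Hs) as [Ls Fs].
    rewrite sumL_map.
    transitivity (sumL (seq 0 Ny) (fun y => prodN m (fun i => W2 (f i j (firstn i y1) (firstn i s)) (nth i s O)) *
        W2 (f m j (firstn m y1) s) y)).
    { apply sumL_ext. intros y _. simpl prodN. f_equal.
      - apply prodN_ext. intros i Hi. destruct (app_last_facts s y i ltac:(lia)) as [E1 E2]. rewrite E1, E2; auto.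
      - destruct (app_last_facts2 s y) as [E1 E2]. rewrite Ls in E1, E2. rewrite E1, E2; auto. }
    rewrite sumL_scal, sumL_seq.
    assert (Hx : (f m j (firstn m y1) s < Nx)%nat).
    { apply Hf; [lia|exact Hj|apply firstn_length_le; lia|exact Ls|apply Forall_firstn'; exact HF|exact Fs]. }
    destruct (HW _ Hx) as [_ S]. rewrite (sumN_ext Ny _ (fun y => W2 (f m j (firstn m y1) s) y)) by auto. rewrite S. lra.
Qed.

Lemma sum_iid Ny (q : nat -> R) : sumN Ny q = 1 ->
  forall m, sumL (seqs Ny m) (fun y => prodN m (fun i => q (nth i y O))) = 1.
Proof.
  intros Hq. induction m.
  - simpl. lra.
  - simpl seqs. rewrite sumL_flat_map. rewrite <- IHm. apply sumL_ext. intros s Hs.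
    destruct (seqs_valid _ _ _ Hs) as [Ls Fs].
    rewrite sumL_map.
    transitivity (sumL (seq 0 Ny) (fun y => prodN m (fun i => q (nth i s O)) * q y)).
    { apply sumL_ext. intros y _. simpl prodN. f_equal.
      - apply prodN_ext. intros i Hi. destruct (app_last_facts s y i ltac:(lia)) as [E1 E2]. rewrite E2; auto.
      - destruct (app_last_facts2 s y) as [E1 E2]. rewrite Ls in E1, E2. rewrite E2; auto. }
    rewrite sumL_scal, sumL_seq, Hq. lra.
Qed.

Lemma outdist_sum Nx Ny W P : is_channel Nx Ny W -> is_dist Nx P ->
  sumN Ny (outdist Nx W P) = 1.
Proof.
  intros HW [_ HP]. unfold outdist.
  rewrite (sumN_swap Ny Nx (fun y x => P x * W x y)).
  rewrite <- HP. apply sumN_ext. intros x Hx. rewrite sumN_scal. destruct (HW x Hx) as [_ S]. assert (S' : sumN Ny (W x) = 1) by exact S. rewrite S'. lra.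
Qed.

Lemma sumN_nonneg K f : (forall i, (i < K)%nat -> 0 <= f i) -> 0 <= sumN K f.
Proof. induction K; simpl; intros H; [lra|]. assert (0 <= sumN K f) by (apply IHK; intros; apply H; lia). assert (0 <= f K) by (apply H; lia). lra. Qed.
Lemma sumN_ge_term K f k : (forall i, (i < K)%nat -> 0 <= f i) -> (k < K)%nat -> f k <= sumN K f.
Proof. induction K; simpl; intros H Hk; [lia|].
  assert (0 <= sumN K f) by (apply sumN_nonneg; intros; apply H; lia).
  destruct (Nat.eq_dec k K).
  - subst. lra.
  - assert (f k <= sumN K f) by (apply IHK; [intros; apply H; lia|lia]). assert (0 <= f K) by (apply H; lia). lra.
Qed.

Lemma outdist_nonneg Nx Ny W P y : is_channel Nx Ny W -> is_dist Nx P -> (y < Ny)%nat -> 0 <= outdist Nx W P y.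
Proof. intros HW [HP _] Hy. apply sumN_nonneg. intros x Hx. apply Rmult_le_pos; auto. apply (proj1 (HW x Hx)); auto. Qed.
Lemma outdist_pos Nx Ny W P x y : is_channel Nx Ny W -> is_dist Nx P -> (forall x, (x < Nx)%nat -> 0 < P x) ->
  (x < Nx)%nat -> (y < Ny)%nat -> 0 < W x y -> 0 < outdist Nx W P y.
Proof. intros HW [HP _] HP' Hx Hy Hw. eapply Rlt_le_trans; [|apply (sumN_ge_term _ (fun x => P x * W x y) x)]; auto.
  apply Rmult_lt_0_compat; auto. intros i Hi. apply Rmult_le_pos; auto. apply (proj1 (HW i Hi)); auto. Qed.

Lemma nth_valid Ny (l : list nat) i : Forall (fun y => (y < Ny)%nat) l -> (i < length l)%nat -> (nth i l O < Ny)%nat.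
Proof. intros F H. rewrite Forall_forall in F. apply F. apply nth_In; auto. Qed.

Lemma x_valid Nx Ny n M f j y1 y2 i : frange Nx Ny n M f -> (j < M)%nat ->
  In y1 (seqs Ny n) -> In y2 (seqs Ny n) -> (i < n)%nat ->
  (f i j (firstn i y1) (firstn i y2) < Nx)%nat /\ (nth i y1 O < Ny)%nat /\ (nth i y2 O < Ny)%nat.
Proof. intros Hf Hj H1 H2 Hi. destruct (seqs_valid _ _ _ H1) as [L1 F1]. destruct (seqs_valid _ _ _ H2) as [L2 F2].
  split; [|split; apply nth_valid; auto; lia].
  apply Hf; auto; try (apply firstn_length_le; lia); apply Forall_firstn'; auto. Qed.

Lemma pmf_nonneg Nx Ny n M W1 W2 f j y1 y2 : is_channel Nx Ny W1 -> is_channel Nx Ny W2 -> frange Nx Ny n M f ->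
  (j < M)%nat -> In y1 (seqs Ny n) -> In y2 (seqs Ny n) -> 0 <= joint_pmf n M W1 W2 f j y1 y2.
Proof. intros HW1 HW2 Hf Hj H1 H2. unfold joint_pmf. apply Rmult_le_pos.
  - apply Rlt_le, Rinv_0_lt_compat, lt_0_INR; lia.
  - apply prodN_nonneg. intros i Hi. destruct (x_valid _ _ _ _ _ _ _ _ _ Hf Hj H1 H2 Hi) as [Hx [Ha Hb]].
    apply Rmult_le_pos; [apply (proj1 (HW1 _ Hx))|apply (proj1 (HW2 _ Hx))]; auto. Qed.

Lemma prob_le_or Nx Ny n M W1 W2 f E F1 F2 : is_channel Nx Ny W1 -> is_channel Nx Ny W2 -> frange Nx Ny n M f ->
  (forall j y1 y2, (j < M)%nat -> In y1 (seqs Ny n) -> In y2 (seqs Ny n) -> E j y1 y2 = true ->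
     F1 j y1 y2 = true \/ F2 j y1 y2 = true) ->
  prob Ny n M W1 W2 f E <= prob Ny n M W1 W2 f F1 + prob Ny n M W1 W2 f F2.
Proof. intros HW1 HW2 Hf H. unfold prob. rewrite <- sumN_plus. apply sumN_le. intros j Hj.
  rewrite <- sumL_plus. apply sumL_le. intros y1 H1. rewrite <- sumL_plus. apply sumL_le. intros y2 H2.
  assert (P := pmf_nonneg _ _ _ _ _ _ _ _ _ _ HW1 HW2 Hf Hj H1 H2).
  specialize (H j y1 y2 Hj H1 H2).
  destruct (E j y1 y2), (F1 j y1 y2), (F2 j y1 y2); try lra; destruct H; auto; discriminate. Qed.

Lemma prob_swap Ny n M W1 W2 f E : prob Ny n M W1 W2 f E =
  prob Ny n M W2 W1 (fun i j p q => f i j q p) (fun j a b => E j b a).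
Proof. unfold prob. apply sumN_ext. intros j _. rewrite sumL_swap. apply sumL_ext. intros y2 _.
  apply sumL_ext. intros y1 _. destruct (E j y1 y2); auto. unfold joint_pmf. f_equal.
  apply prodN_ext. intros; lra. Qed.

Lemma frange_swap Nx Ny n M f : frange Nx Ny n M f -> frange Nx Ny n M (fun i j p q => f i j q p).
Proof. intros H i j p q; intros; apply H; auto. Qed.

Lemma Rleb_true a b : Rleb a b = true <-> a <= b.
Proof. unfold Rleb. destruct (Rle_dec a b); split; intros; auto; try discriminate; contradiction. Qed.

Lemma sum_indicator M k c : sumN M (fun j => if Nat.eqb k j then c else 0) = if Nat.ltb k M then c else 0.
Proof. induction M; simpl. { destruct k; simpl; auto. }
  rewrite IHM. destruct (Nat.eqb_spec k M), (Nat.ltb_spec k M), (Nat.ltb_spec k (S M)); try lia; lra. Qed.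

Lemma exp_bound (R0 Mr lambda : R) : 0 < R0 -> 0 < Mr -> ln R0 <= ln Mr - lambda -> R0 <= Mr * exp (- lambda).
Proof. intros H0 HM HL. rewrite <- (exp_ln R0) by auto. rewrite <- (exp_ln Mr) by auto.
  rewrite <- exp_plus. replace (ln Mr + - lambda) with (ln Mr - lambda) by ring.
  destruct (Rle_lt_or_eq_dec _ _ HL) as [h|h]; [apply Rlt_le, exp_increasing; auto | rewrite h; lra]. Qed.

Lemma pointwise Nx Ny n M W1 W2 Pstar f g lambda j y1 y2 :
  is_channel Nx Ny W1 -> is_channel Nx Ny W2 -> is_dist Nx Pstar -> (forall x, (x < Nx)%nat -> 0 < Pstar x) ->
  frange Nx Ny n M f -> (j < M)%nat -> In y1 (seqs Ny n) -> In y2 (seqs Ny n) ->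
  (if Rleb (sumN n (fun i => info_density Nx W1 Pstar (f i j (firstn i y1) (firstn i y2)) (nth i y1 O))) (ln (INR M) - lambda)
      && Nat.eqb (g y1) j then joint_pmf n M W1 W2 f j y1 y2 else 0)
  <= (if Nat.eqb (g y1) j then exp (- lambda) * prodN n (fun i => outdist Nx W1 Pstar (nth i y1 O))
        * prodN n (fun i => W2 (f i j (firstn i y1) (firstn i y2)) (nth i y2 O)) else 0).
Proof.
  intros HW1 HW2 HP HP' Hf Hj H1 H2.
  set (x := fun i => f i j (firstn i y1) (firstn i y2)).
  set (a := fun i => W1 (x i) (nth i y1 O)).
  set (b := fun i => W2 (x i) (nth i y2 O)).
  set (q := fun i => outdist Nx W1 Pstar (nth i y1 O)).
  assert (Va : forall i, (i < n)%nat -> 0 <= a i).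
  { intros i Hi. destruct (x_valid _ _ _ _ _ _ _ _ _ Hf Hj H1 H2 Hi) as [Hx [Ha Hb]]. apply (proj1 (HW1 _ Hx)); auto. }
  assert (Vb : 0 <= prodN n b).
  { apply prodN_nonneg. intros i Hi. destruct (x_valid _ _ _ _ _ _ _ _ _ Hf Hj H1 H2 Hi) as [Hx [Ha Hb]]. apply (proj1 (HW2 _ Hx)); auto. }
  assert (Vq : 0 <= prodN n q).
  { apply prodN_nonneg. intros i Hi. destruct (x_valid _ _ _ _ _ _ _ _ _ Hf Hj H1 H2 Hi) as [Hx [Ha Hb]]. unfold q; apply (outdist_nonneg Nx Ny W1 Pstar); auto. }
  assert (He := exp_pos (- lambda)).
  assert (HMpos : 0 < INR M) by (apply lt_0_INR; lia).
  change (prodN n (fun i => outdist Nx W1 Pstar (nth i y1 O))) with (prodN n q).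
  change (prodN n (fun i => W2 (f i j (firstn i y1) (firstn i y2)) (nth i y2 O))) with (prodN n b).
  assert (RHS0 : 0 <= exp (- lambda) * prodN n q * prodN n b) by (apply Rmult_le_pos; [apply Rmult_le_pos|]; lra).
  destruct (Nat.eqb (g y1) j).
  2:{ rewrite andb_false_r. lra. }
  rewrite andb_true_r.
  destruct (Rleb _ _) eqn:HL.
  2:{ lra. }
  apply Rleb_true in HL.
  assert (Ej : joint_pmf n M W1 W2 f j y1 y2 = / INR M * (prodN n a * prodN n b)).
  { unfold joint_pmf. rewrite <- prodN_mult. reflexivity. }
  rewrite Ej.
  destruct (prodN_cases n a Va) as [Z|Pos].
  { rewrite Z. lra. }
  assert (Qpos : forall i, (i < n)%nat -> 0 < q i).
  { intros i Hi. destruct (x_valid _ _ _ _ _ _ _ _ _ Hf Hj H1 H2 Hi) as [Hx [Ha Hb]].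
    apply (outdist_pos Nx Ny W1 Pstar (x i)); auto. apply Pos; auto. }
  set (r := fun i => a i / q i).
  assert (Rpos : forall i, (i < n)%nat -> 0 < r i).
  { intros i Hi. unfold r. apply Rdiv_lt_0_compat; auto. }
  change (sumN n (fun i => ln (r i)) <= ln (INR M) - lambda) in HL.
  rewrite sum_ln in HL by auto.
  assert (Br := exp_bound _ _ _ (prodN_pos n r Rpos) HMpos HL).
  assert (Ea : prodN n a = prodN n r * prodN n q).
  { rewrite <- prodN_mult. apply prodN_ext. intros i Hi. unfold r. assert (q i <> 0) by (apply Rgt_not_eq, Qpos; auto). field; auto. }
  rewrite Ea.
  assert (B2 : / INR M * prodN n r <= exp (- lambda)).
  { apply Rle_trans with (/ INR M * (INR M * exp (- lambda))).
    - apply Rmult_le_compat_l; auto. apply Rlt_le, Rinv_0_lt_compat; auto.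
    - right. field. lra. }
  replace (/ INR M * (prodN n r * prodN n q * prodN n b)) with ((/ INR M * prodN n r) * (prodN n q * prodN n b)) by ring.
  replace (exp (- lambda) * prodN n q * prodN n b) with (exp (- lambda) * (prodN n q * prodN n b)) by ring.
  apply Rmult_le_compat_r; auto. apply Rmult_le_pos; auto.
Qed.

Lemma main_bound Nx Ny n M W1 W2 Pstar f g lambda :
  is_channel Nx Ny W1 -> is_channel Nx Ny W2 -> is_dist Nx Pstar -> (forall x, (x < Nx)%nat -> 0 < Pstar x) ->
  frange Nx Ny n M f ->
  prob Ny n M W1 W2 f (fun j y1 y2 =>
    Rleb (sumN n (fun i => info_density Nx W1 Pstar (f i j (firstn i y1) (firstn i y2)) (nth i y1 O))) (ln (INR M) - lambda)
      && Nat.eqb (g y1) j) <= exp (- lambda).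
Proof.
  intros HW1 HW2 HP HP' Hf. unfold prob.
  set (S := seqs Ny n).
  apply Rle_trans with (sumN M (fun j => sumL S (fun y1 =>
      if Nat.eqb (g y1) j then exp (- lambda) * prodN n (fun i => outdist Nx W1 Pstar (nth i y1 O)) else 0))).
  { apply sumN_le. intros j Hj. apply sumL_le. intros y1 H1.
    apply Rle_trans with (sumL S (fun y2 => if Nat.eqb (g y1) j then exp (- lambda) * prodN n (fun i => outdist Nx W1 Pstar (nth i y1 O))
        * prodN n (fun i => W2 (f i j (firstn i y1) (firstn i y2)) (nth i y2 O)) else 0)).
    { apply sumL_le. intros y2 H2. apply (pointwise Nx Ny); auto. }
    right. destruct (Nat.eqb (g y1) j).
    - rewrite sumL_scal. destruct (seqs_valid _ _ _ H1) as [L1 F1].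
      unfold S; rewrite (sum_chain Nx Ny W2 f n M j y1); auto. lra.
    - apply sumL_zero. }
  rewrite sumN_sumL.
  apply Rle_trans with (sumL S (fun y1 => exp (- lambda) * prodN n (fun i => outdist Nx W1 Pstar (nth i y1 O)))).
  { apply sumL_le. intros y1 H1. rewrite sum_indicator.
    assert (0 <= exp (- lambda) * prodN n (fun i => outdist Nx W1 Pstar (nth i y1 O))).
    { apply Rmult_le_pos. apply Rlt_le, exp_pos. apply prodN_nonneg. intros i Hi.
      destruct (seqs_valid _ _ _ H1) as [L1 F1]. apply (outdist_nonneg Nx Ny); auto. apply nth_valid; auto; lia. }
    destruct (Nat.ltb _ _); lra. }
  rewrite sumL_scal. unfold S. rewrite (sum_iid Ny (outdist Nx W1 Pstar)); [lra|].
  apply (outdist_sum Nx Ny); auto.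
Qed.

Theorem theorem1 (Nx Ny : nat) (W1 W2 : nat -> nat -> R) (Pstar : nat -> R)
  (eta : R) (n M : nat) (eps : R)
  (f : nat -> nat -> list nat -> list nat -> nat) (g1 g2 : list nat -> nat) :
  standing_assumptions Nx Ny W1 W2 Pstar eta ->
  (1 <= n)%nat -> (1 <= M)%nat -> 0 <= eps <= 1 ->
  is_FLF_code Nx Ny W1 W2 n M eps f g1 g2 ->
  forall lambda : R, 0 < lambda ->
  eps >= / 2 * prob Ny n M W1 W2 f
           (fun j y1 y2 => Rleb (weighted_density Nx n W1 W2 Pstar eta f j y1 y2)
                                (ln (INR M) - lambda))
         - exp (- lambda).
Proof.
  intros SA Hn HM Heps [Hf [E1 E2]] lambda Hl.
  destruct SA as (_ & _ & HW1 & HW2 & HP & _ & HP' & _ & _ & _ & _ & Heta & _).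
  set (c := ln (INR M) - lambda).
  set (L1 := fun j (y1 y2 : list nat) => sumN n (fun i => info_density Nx W1 Pstar (f i j (firstn i y1) (firstn i y2)) (nth i y1 O))).
  set (L2 := fun j (y1 y2 : list nat) => sumN n (fun i => info_density Nx W2 Pstar (f i j (firstn i y1) (firstn i y2)) (nth i y2 O))).
  set (P := prob Ny n M W1 W2 f).
  assert (A1 : P (fun j y1 y2 => Rleb (weighted_density Nx n W1 W2 Pstar eta f j y1 y2) c) <=
               P (fun j y1 y2 => Rleb (L1 j y1 y2) c) + P (fun j y1 y2 => Rleb (L2 j y1 y2) c)).
  { apply (prob_le_or Nx Ny); auto. intros j y1 y2 _ _ _ H. apply Rleb_true in H.
    unfold weighted_density in H. fold (L1 j y1 y2) (L2 j y1 y2) in H.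
    destruct (Rle_dec (L1 j y1 y2) c) as [h|h]; [left; apply Rleb_true; auto|].
    destruct (Rle_dec (L2 j y1 y2) c) as [h'|h']; [right; apply Rleb_true; auto|].
    exfalso. apply Rnot_le_lt in h, h'. nra. }
  assert (A2 : P (fun j y1 y2 => Rleb (L1 j y1 y2) c) <=
      P (fun j y1 y2 => negb (Nat.eqb (g1 y1) j)) + P (fun j y1 y2 => Rleb (L1 j y1 y2) c && Nat.eqb (g1 y1) j)).
  { apply (prob_le_or Nx Ny); auto. intros j y1 y2 _ _ _ H. rewrite H. destruct (Nat.eqb (g1 y1) j); auto. }
  assert (A3 : P (fun j y1 y2 => Rleb (L2 j y1 y2) c) <=
      P (fun j y1 y2 => negb (Nat.eqb (g2 y2) j)) + P (fun j y1 y2 => Rleb (L2 j y1 y2) c && Nat.eqb (g2 y2) j)).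
  { apply (prob_le_or Nx Ny); auto. intros j y1 y2 _ _ _ H. rewrite H. destruct (Nat.eqb (g2 y2) j); auto. }
  assert (B1 : P (fun j y1 y2 => Rleb (L1 j y1 y2) c && Nat.eqb (g1 y1) j) <= exp (- lambda)).
  { apply (main_bound Nx Ny n M W1 W2 Pstar f g1 lambda); auto. }
  assert (B2 : P (fun j y1 y2 => Rleb (L2 j y1 y2) c && Nat.eqb (g2 y2) j) <= exp (- lambda)).
  { unfold P. rewrite prob_swap.
    apply (main_bound Nx Ny n M W2 W1 Pstar (fun i j p q => f i j q p) g2 lambda); auto.
    apply frange_swap; auto. }
  fold c. fold P. unfold P in E1, E2. fold P in E1, E2. lra.
Qed.
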